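(* Let $R$ be a Noetherian ring, let $P\in\operatorname{Spec}(R)$, and let $f:R\to R_P$ be the localization map. Let $\mathcal P(P)$ be the set of $P$-primary ideals of $R$, regarded as a subspace of $\mathcal I^\bullet(R)$ with the constructible topology, and let $\mathcal P(P)_\infty$ be the set of ideals of $R$ that are intersections of nonempty families of $P$-primary ideals. Then $$\mathcal P(P)_\infty=\mathrm{Cl}^\mathrm{cons}(\mathcal P(P))=f^\sharp(\mathcal I^\bullet(R_P)),$$ where $f^\sharp(J):=f^{-1}(J)$. In particular, if $R$ is local with maximal ideal $\mathfrak m$, then $\mathcal P(\mathfrak m)$ is dense in $\mathcal I^\bullet(R)$ with respect to the constructible topology.
   Context: For a ring $A$, $\mathcal I(A)$ is the set of ideals of $A$ and $\mathcal I^\bullet(A)$ the set of proper ideals. $\mathcal I(A)$ carries the Zariski topology with basis of open sets $\mathcal B(x_1,\ldots,x_n):=\{I\in\mathcal I(A)\mid x_1,\ldots,x_n\in I\}$; it is a spectral space. The constructible topology is the coarsest topology in which all open quasi-compact subsets of $\mathcal I(A)$ are clopen; $\mathrm{Cl}^\mathrm{cons}$ denotes closure in it, and $\mathcal I^\bullet(A)$ carries the subspace topology. *)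

(* Defs.v *)
From mathcomp Require Import all_boot all_order all_algebra.
Set Implicit Arguments. Unset Strict Implicit. Unset Printing Implicit Defensive.
Import GRing.Theory.
Local Open Scope ring_scope.

Definition is_ideal (R : comNzRingType) (I : R -> Prop) : Prop :=
  [/\ I 0, (forall x y, I x -> I y -> I (x + y)) & (forall a x, I x -> I (a * x))].

Record ideal (R : comNzRingType) := Ideal { ival : R -> Prop; ivalP : is_ideal ival }.

(** proper ideals: the elements of I^bullet(A) *)
Definition is_proper_ideal (R : comNzRingType) (I : ideal R) : Prop := ~ ival I 1.

Definition is_prime_ideal (R : comNzRingType) (P : ideal R) : Prop :=
  is_proper_ideal P /\ (forall x y, ival P (x * y) -> ival P x \/ ival P y).

Definition is_maximal_ideal (R : comNzRingType) (M : ideal R) : Prop :=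
  is_proper_ideal M /\
  (forall J : ideal R, is_proper_ideal J -> (forall x, ival M x -> ival J x) ->
     forall x, ival J x -> ival M x).

Definition local_with_max (R : comNzRingType) (m : ideal R) : Prop :=
  is_maximal_ideal m /\
  (forall J : ideal R, is_maximal_ideal J -> forall x, ival J x <-> ival m x).

Definition noetherian (R : comNzRingType) : Prop :=
  forall I : nat -> ideal R, (forall n x, ival (I n) x -> ival (I n.+1) x) ->
  exists N, forall n, (N <= n)%N -> forall x, ival (I n) x <-> ival (I N) x.

Definition primary_ideal (R : comNzRingType) (Q : ideal R) : Prop :=
  is_proper_ideal Q /\
  (forall x y, ival Q (x * y) -> ival Q x \/ exists n, ival Q (y ^+ n)).

Definition P_primary (R : comNzRingType) (P Q : ideal R) : Prop :=
  primary_ideal Q /\ (forall x, (exists n, ival Q (x ^+ n)) <-> ival P x).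

Definition primaries (R : comNzRingType) (P : ideal R) : ideal R -> Prop :=
  fun Q => P_primary P Q.

Definition primaries_infty (R : comNzRingType) (P : ideal R) : ideal R -> Prop :=
  fun I => exists C : ideal R -> Prop,
    (exists Q, C Q) /\ (forall Q, C Q -> P_primary P Q) /\
    (forall x, ival I x <-> forall Q, C Q -> ival Q x).

(** f is a localization map R -> S at the prime P (i.e. S = R_P):
    the standard characterization (Atiyah--Macdonald, Prop. 3.1). *)
Definition is_localization_at (R : comNzRingType) (S : comUnitRingType)
    (P : ideal R) (f : {rmorphism R -> S}) : Prop :=
  [/\ (forall s, ~ ival P s -> f s \is a GRing.unit),
      (forall y : S, exists r s, ~ ival P s /\ y = f r / f s) &
      (forall r, f r = 0 -> exists s, ~ ival P s /\ s * r = 0)].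

Definition contractions (R : comNzRingType) (S : comUnitRingType)
    (f : {rmorphism R -> S}) : ideal R -> Prop :=
  fun I => exists J : ideal S, is_proper_ideal J /\ (forall x, ival I x <-> ival J (f x)).

(** Zariski topology on I(A): basis B(x_1,...,x_n) *)
Definition zbasic (R : comNzRingType) (s : seq R) : ideal R -> Prop :=
  fun I => forall x, x \in s -> ival I x.

Definition zopen (R : comNzRingType) (U : ideal R -> Prop) : Prop :=
  forall I, U I -> exists s, zbasic s I /\ (forall J, zbasic s J -> U J).

Definition quasi_compact (R : comNzRingType) (U : ideal R -> Prop) : Prop :=
  forall C : (ideal R -> Prop) -> Prop,
    (forall V, C V -> zopen V) ->
    (forall I, U I -> exists V, C V /\ V I) ->
    exists (n : nat) (V : nat -> ideal R -> Prop),
      (forall i, (i < n)%N -> C (V i)) /\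
      (forall I, U I -> exists i, (i < n)%N /\ V i I).

(** constructible topology: the topology generated by the open quasi-compact
    sets and their complements (the coarsest one making them clopen) *)
Definition cons_subbasic (R : comNzRingType) (W : ideal R -> Prop) : Prop :=
  exists U, zopen U /\ quasi_compact U /\
    ((forall I, W I <-> U I) \/ (forall I, W I <-> ~ U I)).

Definition cons_open (R : comNzRingType) (W : ideal R -> Prop) : Prop :=
  forall I, W I -> exists (n : nat) (S : nat -> ideal R -> Prop),
    (forall i, (i < n)%N -> cons_subbasic (S i) /\ S i I) /\
    (forall J, (forall i, (i < n)%N -> S i J) -> W J).

Definition cl_cons (R : comNzRingType) (A : ideal R -> Prop) : ideal R -> Prop :=
  fun I => forall W, cons_open W -> W I -> exists J, W J /\ A J.

(** closure in the subspace I^bullet(A) of a subset A of I^bullet(A) *)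
Definition cl_cons_proper (R : comNzRingType) (A : ideal R -> Prop) : ideal R -> Prop :=
  fun I => is_proper_ideal I /\ cl_cons A I.

(* Main.v *)
Require Import Defs.
From mathcomp Require Import all_boot all_order all_algebra.
From mathcomp Require Import ring.
From Stdlib Require Import Classical ClassicalEpsilon.
Set Implicit Arguments. Unset Strict Implicit. Unset Printing Implicit Defensive.
Import GRing.Theory.
Local Open Scope ring_scope.

Lemma id0 (R : comNzRingType) (I : ideal R) : ival I 0.
Proof. by case: (ivalP I). Qed.
Lemma idD (R : comNzRingType) (I : ideal R) x y : ival I x -> ival I y -> ival I (x + y).
Proof. by case: (ivalP I) => _ H _; apply: H. Qed.
Lemma idM (R : comNzRingType) (I : ideal R) a x : ival I x -> ival I (a * x).
Proof. by case: (ivalP I) => _ _ H; apply: H. Qed.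
Lemma idMr (R : comNzRingType) (I : ideal R) a x : ival I x -> ival I (x * a).
Proof. by rewrite mulrC; apply: idM. Qed.
Lemma idN (R : comNzRingType) (I : ideal R) x : ival I x -> ival I (- x).
Proof. by move=> h; rewrite -mulN1r; apply: idM. Qed.
Lemma idB (R : comNzRingType) (I : ideal R) x y : ival I x -> ival I y -> ival I (x - y).
Proof. by move=> h1 h2; apply: idD => //; apply: idN. Qed.
Lemma idX (R : comNzRingType) (I : ideal R) x n : ival I x -> ival I (x ^+ n.+1).
Proof. by move=> h; rewrite exprSr; apply: idM. Qed.

Definition sumI (R : comNzRingType) (K : ideal R) (a : R) : ideal R.
Proof.
refine (@Ideal R (fun z => exists k r, ival K k /\ z = k + r * a) _).
split.
- by exists 0, 0; rewrite add0r mul0r; split => //; apply: id0.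
- move=> x y [k [r [hk ->]]] [k' [r' [hk' ->]]].
  exists (k + k'), (r + r'); split; first by apply: idD.
  by rewrite mulrDl addrACA.
- move=> b x [k [r [hk ->]]]; exists (b * k), (b * r); split; first by apply: idM.
  by rewrite mulrDr mulrA.
Defined.

Definition colonI (R : comNzRingType) (K : ideal R) (b : R) : ideal R.
Proof.
refine (@Ideal R (fun z => ival K (b * z)) _).
split.
- by rewrite mulr0; apply: id0.
- by move=> x y h1 h2; rewrite mulrDr; apply: idD.
- by move=> a x h; rewrite mulrCA; apply: idM.
Defined.

Definition capI (R : comNzRingType) (K L : ideal R) : ideal R.
Proof.
refine (@Ideal R (fun z => ival K z /\ ival L z) _).
split.
- by split; apply: id0.
- by move=> x y [h1 h2] [h3 h4]; split; apply: idD.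
- by move=> a x [h1 h2]; split; apply: idM.
Defined.

Definition princ (R : comNzRingType) (a : R) : ideal R.
Proof.
refine (@Ideal R (fun z => exists r, z = r * a) _).
split.
- by exists 0; rewrite mul0r.
- by move=> x y [r ->] [s ->]; exists (r + s); rewrite mulrDl.
- by move=> b x [r ->]; exists (b * r); rewrite mulrA.
Defined.

Definition comap (R : comNzRingType) (S : comNzRingType) (f : {rmorphism R -> S})
  (J : ideal S) : ideal R.
Proof.
refine (@Ideal R (fun z => ival J (f z)) _).
split.
- by rewrite rmorph0; apply: id0.
- by move=> x y h1 h2; rewrite rmorphD; apply: idD.
- by move=> a x h; rewrite rmorphM; apply: idM.
Defined.

Lemma max_exists (R : comNzRingType) (F : ideal R -> Prop) : noetherian R ->
  forall K0, F K0 -> exists Q, F Q /\ forall K, F K -> (forall x, ival Q x -> ival K x) ->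
    forall x, ival K x -> ival Q x.
Proof.
move=> hN K0 FK0; apply: NNPP => hn.
have ex : forall Q, exists K, F Q -> [/\ F K, (forall x, ival Q x -> ival K x) &
    exists x, ival K x /\ ~ ival Q x].
  move=> Q; case: (classic (F Q)) => FQ; last by exists Q.
  apply: NNPP => hK; apply: hn; exists Q; split => // K FK sub x Kx.
  apply: NNPP => nQ; apply: hK; exists K => _; split => //; by exists x.
pose g Q := proj1_sig (constructive_indefinite_description _ (ex Q)).
have gP Q : F Q -> [/\ F (g Q), (forall x, ival Q x -> ival (g Q) x) &
    exists x, ival (g Q) x /\ ~ ival Q x].
  exact: (proj2_sig (constructive_indefinite_description _ (ex Q))).
pose c n := iter n g K0.
have Fc n : F (c n) by elim: n => //= n IH; case: (gP _ IH).
have [N HN] := hN c (fun n => let: And3 _ h _ := gP _ (Fc n) in h).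
have [_ _ [x [h1 h2]]] := gP _ (Fc N).
by apply: h2; apply/(HN N.+1 (leqnSn N)).
Qed.

Lemma colon_mono (R : comNzRingType) (K : ideal R) b n x :
  ival (colonI K (b ^+ n)) x -> ival (colonI K (b ^+ n.+1)) x.
Proof. move=> h; have := idM b (h : ival K (b ^+ n * x)); rewrite mulrA -exprS; exact. Qed.

Lemma key (R : comNzRingType) (M : R -> Prop) : noetherian R ->
  (forall p c, M p -> exists v, (1 - p * c) * v = 1) ->
  forall (J : ideal R) y, ~ ival J y -> exists Q : ideal R,
    [/\ (forall z, ival J z -> ival Q z), ~ ival Q y,
        (forall a b, ival Q (a * b) -> ival Q a \/ exists n, ival Q (b ^+ n)) &
        (forall p, M p -> exists n, ival Q (p ^+ n))].
Proof.
move=> hN hU J y nJy.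
have [Q [[JQ nQy] Qmax]] := max_exists (F := fun K : ideal R => (forall z, ival J z -> ival K z) /\ ~ ival K y) hN (conj (fun z h => h) nJy).
have insum a : ~ ival Q a -> exists k r, ival Q k /\ y = k + r * a.
  move=> nQa; apply: NNPP => hy; apply: nQa.
  apply: (Qmax (sumI Q a)).
  - split; first by move=> z /JQ Qz; exists z, 0; rewrite mul0r addr0.
    by move=> h; apply: hy; exact: h.
  - by move=> x Qx; exists x, 0; rewrite mul0r addr0.
  - by exists 0, 1; rewrite add0r mul1r; split => //; apply: id0.
exists Q; split => //.
- move=> a b Qab; case: (classic (ival Q a)) => Qa; [by left | right].
  have mono : forall n x, ival (colonI Q (b ^+ n)) x -> ival (colonI Q (b ^+ n.+1)) x.
    exact: colon_mono.
  have [N HN] := hN (fun n => colonI Q (b ^+ n)) mono.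
  exists N; apply: NNPP => nQb.
  have [k [r [Qk ey]]] := insum _ nQb.
  have [k' [r' [Qk' ey']]] := insum _ Qa.
  have Qby : ival Q (b * y).
    rewrite ey' mulrDr; apply: idD; first by apply: idM.
    by rewrite mulrCA; apply: idM; rewrite mulrC.
  have h1 : ival (colonI Q (b ^+ N.+1)) r.
    rewrite /= exprS -mulrA mulrC.
    have -> : b ^+ N * r * b = b * y - b * k by rewrite ey; ring.
    by apply: idB => //; apply: idM.
  have h2 : ival (colonI Q (b ^+ N)) r by apply/(HN N.+1 (leqnSn N)).
  apply: nQy; rewrite ey; apply: idD => //; rewrite mulrC; exact: h2.
- move=> p Mp; apply: NNPP => hn.
  have nQp n : ~ ival Q (p ^+ n) by move=> h; apply: hn; exists n.
  have mono : forall n x, ival (colonI (sumI Q y) (p ^+ n)) x -> ival (colonI (sumI Q y) (p ^+ n.+1)) x.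
    exact: colon_mono.
  have [N HN] := hN (fun n => colonI (sumI Q y) (p ^+ n)) mono.
  have [k [r [Qk ey]]] := insum _ (nQp N.+1).
  have h1 : ival (colonI (sumI Q y) (p ^+ N.+1)) r.
    exists (- k), 1; split; first by apply: idN.
    by rewrite ey; ring.
  have [k' [r' [Qk' e2]]] : ival (colonI (sumI Q y) (p ^+ N)) r by apply/(HN N.+1 (leqnSn N)).
  have [v hv] := hU p r' Mp.
  have Q1 : ival Q ((1 - p * r') * y).
    have -> : (1 - p * r') * y = k + p * k'.
      have e3 : r * p ^+ N.+1 = p * (k' + r' * y) by rewrite -e2 exprS; ring.
      by rewrite mulrBl mul1r {1}ey e3; ring.
    by apply: idD => //; apply: idM.
  apply: nQy; have -> : y = v * ((1 - p * r') * y) by rewrite mulrA (mulrC v) hv mul1r.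
  by apply: idM.
Qed.

Lemma zopen_up (R : comNzRingType) (U : ideal R -> Prop) I J : zopen U -> U I ->
  (forall x, ival I x -> ival J x) -> U J.
Proof.
move=> hU UI IJ; have [s [hs hsU]] := hU I UI; apply: hsU => x xs; apply: IJ; exact: hs.
Qed.

Lemma qc_avoid (R : comNzRingType) (V : ideal R -> Prop) : zopen V -> quasi_compact V ->
  forall I, ~ V I -> exists s : seq R, (forall x, x \in s -> ~ ival I x) /\
     (forall J, V J -> exists x, x \in s /\ ival J x).
Proof.
move=> hV hq I nVI.
pose C (W : ideal R -> Prop) := exists s, W = zbasic s /\ (forall J, zbasic s J -> V J).
have c1 : forall W, C W -> zopen W by move=> W [s [-> _]] J hJ; exists s; split.
have c2 : forall J, V J -> exists W, C W /\ W J.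
  move=> J VJ; have [s [hs hsV]] := hV J VJ; exists (zbasic s); split => //; exists s; split => //.
have [n [Vf [CV cov]]] := hq C c1 c2.
have ex i : exists x : R, (i < n)%N -> ~ ival I x /\ forall J, Vf i J -> ival J x.
  case: (ltnP i n) => hi; last by exists 0.
  have [s [es hsV]] := CV i hi.
  have : ~ zbasic s I by move=> h; apply: nVI; apply: hsV.
  move=> nb; apply: NNPP => hn; apply: nb => x xs; apply: NNPP => nIx; apply: hn.
  exists x => _; split => // J; rewrite es => hJ; exact: hJ.
pose xs i := proj1_sig (constructive_indefinite_description _ (ex i)).
have xsP i : (i < n)%N -> ~ ival I (xs i) /\ forall J, Vf i J -> ival J (xs i).
  exact: (proj2_sig (constructive_indefinite_description _ (ex i))).
exists [seq xs i | i <- iota 0 n]; split.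
- move=> x /mapP [i]; rewrite mem_iota add0n => /andP [_ hi] ->; exact: (proj1 (xsP i hi)).
- move=> J VJ; have [i [hi hJ]] := cov J VJ; exists (xs i); split.
  + by apply/mapP; exists i => //; rewrite mem_iota add0n hi.
  + exact: (proj2 (xsP i hi)).
Qed.

Lemma idXD (R : comNzRingType) (Q : ideal R) y n m : ival Q (y ^+ n) -> ival Q (y ^+ (n + m)).
Proof. by move=> h; rewrite exprD; apply: idMr. Qed.
Lemma idXD' (R : comNzRingType) (Q : ideal R) y n m : ival Q (y ^+ m) -> ival Q (y ^+ (n + m)).
Proof. by move=> h; rewrite exprD; apply: idM. Qed.

Lemma prim_cap (R : comNzRingType) (P Q1 Q2 : ideal R) :
  P_primary P Q1 -> P_primary P Q2 -> P_primary P (capI Q1 Q2).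
Proof.
move=> [[p1 h1] r1] [[p2 h2] r2]; split; first split.
- by move=> [].
- move=> x y [Q1xy Q2xy].
  case: (classic (ival Q1 x /\ ival Q2 x)) => hx; [by left | right].
  case: (classic (ival Q1 x)) => hx1.
  + have hx2 : ~ ival Q2 x by move=> h; apply: hx.
    case: (h2 _ _ Q2xy) => // -[n hn].
    have [m hm] : exists m, ival Q1 (y ^+ m) by apply/r1/r2; exists n.
    by exists (m + n); split; [apply: idXD | apply: idXD'].
  + case: (h1 _ _ Q1xy) => // -[n hn].
    have [m hm] : exists m, ival Q2 (y ^+ m) by apply/r2/r1; exists n.
    by exists (n + m); split; [apply: idXD | apply: idXD'].
- move=> x; split.
  + by move=> [n [hn _]]; apply/r1; exists n.
  + move=> Px; have [n hn] := (proj2 (r1 x) Px); have [m hm] := (proj2 (r2 x) Px).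
    by exists (n + m); split; [apply: idXD | apply: idXD'].
Qed.

Lemma avoid_seq (R : comNzRingType) (P I : ideal R) :
  (exists Q, P_primary P Q /\ (forall z, ival I z -> ival Q z)) ->
  (forall x, ~ ival I x -> exists Q, [/\ P_primary P Q, (forall z, ival I z -> ival Q z) & ~ ival Q x]) ->
  forall s : seq R, (forall x, x \in s -> ~ ival I x) ->
  exists Q, [/\ P_primary P Q, (forall z, ival I z -> ival Q z) & forall x, x \in s -> ~ ival Q x].
Proof.
move=> [Q0 [hQ0 IQ0]] hsep; elim=> [|a s IH] hs.
  by exists Q0; split.
have [Q1 [p1 i1 n1]] := IH (fun x xs => hs x (@mem_behead _ (a :: s) x xs)).
have [Q2 [p2 i2 n2]] := hsep a (hs a (mem_head a s)).
exists (capI Q1 Q2); split; first exact: prim_cap.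
- by move=> z hz; split; [apply: i1 | apply: i2].
- move=> x; rewrite in_cons => /orP [/eqP -> | xs] [h1 h2]; first exact: n2.
  exact: (n1 x xs).
Qed.

Lemma cl_of_sep (R : comNzRingType) (P I : ideal R) :
  (exists Q, P_primary P Q /\ (forall z, ival I z -> ival Q z)) ->
  (forall x, ~ ival I x -> exists Q, [/\ P_primary P Q, (forall z, ival I z -> ival Q z) & ~ ival Q x]) ->
  cl_cons (primaries P) I.
Proof.
move=> h0 hsep W hW WI.
have [n [S [hS SW]]] := hW I WI.
pose G (T : ideal R -> Prop) := exists s : seq R, (forall x, x \in s -> ~ ival I x) /\
  forall Q, (forall z, ival I z -> ival Q z) -> (forall x, x \in s -> ~ ival Q x) -> T Q.
have Gm : forall m, (m <= n)%N -> G (fun Q => forall i, (i < m)%N -> S i Q).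
  elim=> [|m IH] hm.
    by exists [::]; split => // Q _ _ i.
  have [s [hs1 hs2]] := IH (ltnW hm).
  have [[U [zU [qU [e|e]]]] SI] := hS m hm.
  - exists s; split => // Q IQ nQ i; rewrite ltnS leq_eqVlt => /orP [/eqP -> | hi].
      by apply/e; apply: (zopen_up zU (proj1 (e I) SI)).
    exact: hs2.
  - have [t [ht1 ht2]] := qc_avoid zU qU (proj1 (e I) SI).
    exists (s ++ t); split.
      by move=> x; rewrite mem_cat => /orP [|]; [apply: hs1 | apply: ht1].
    move=> Q IQ nQ i; rewrite ltnS leq_eqVlt => /orP [/eqP -> | hi].
      apply/e => UQ; have [x [xt Qx]] := ht2 Q UQ.
      by apply: (nQ x) => //; rewrite mem_cat xt orbT.
    by apply: hs2 => // x xs; apply: nQ; rewrite mem_cat xs.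
have [s [hs1 hs2]] := Gm n (leqnn n).
have [Q [pQ IQ nQ]] := avoid_seq h0 hsep hs1.
exists Q; split => //; apply: SW; exact: hs2.
Qed.

Lemma mul_frac (S : comUnitRingType) (r w : S) : w \is a GRing.unit -> r / w * w = r.
Proof. by move=> hw; rewrite -mulrA mulVr ?mulr1. Qed.

Lemma noeth_loc (R : comNzRingType) (P : ideal R) (S : comUnitRingType)
  (f : {rmorphism R -> S}) : noetherian R -> is_localization_at P f -> noetherian S.
Proof.
move=> hN [hu hs hk] J mono.
have [N HN] := hN (fun n => comap f (J n)) (fun n x h => mono n (f x) h).
exists N => n hn x; split.
- move=> Jx; have [r [s [Ps ex]]] := hs x; subst x.
  have h1 : ival (J n) (f r).
    by rewrite -(mul_frac (f r) (hu s Ps)); apply: idMr.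
  have h2 : ival (comap f (J N)) r by apply/(HN n hn).
  by apply: idMr.
- have mono' k : ival (J N) x -> ival (J (N + k)%N) x.
    by elim: k => [|k IH]; rewrite ?addn0 // addnS => h; apply: mono; apply: IH.
  by move=> h; rewrite -(subnKC hn); apply: mono'.
Qed.

Lemma units_loc (R : comNzRingType) (P : ideal R) (S : comUnitRingType)
  (f : {rmorphism R -> S}) : is_prime_ideal P -> is_localization_at P f ->
  forall p c, (exists a, ival P a /\ p = f a) -> exists v, (1 - p * c) * v = 1.
Proof.
move=> [pP prP] [hu hs hk] p c [a [Pa ->]].
have [r [s [Ps ->]]] := hs c.
have Psr : ~ ival P (s - a * r).
  move=> h; apply: Ps; have -> : s = (s - a * r) + r * a by ring.
  by apply: idD => //; apply: idM.
have us := hu _ Ps; have usr := hu _ Psr.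
exists (f s / f (s - a * r)).
have -> : 1 - f a * (f r / f s) = f (s - a * r) / f s.
  by rewrite rmorphB rmorphM mulrBl divrr // mulrA.
by rewrite mulrA -(mulrA _ _ (f s)) mulVr // mulr1 divrr.
Qed.

Lemma contr_primary (R : comNzRingType) (P : ideal R) (S : comUnitRingType)
  (f : {rmorphism R -> S}) (Q : ideal S) y : is_localization_at P f -> ~ ival Q y ->
  (forall a b, ival Q (a * b) -> ival Q a \/ exists n, ival Q (b ^+ n)) ->
  (forall p, (exists a, ival P a /\ p = f a) -> exists n, ival Q (p ^+ n)) ->
  P_primary P (comap f Q).
Proof.
move=> [hu hs hk] nQy hpr hrad.
have nQ1 : ~ ival Q 1 by move=> h; apply: nQy; rewrite -(mulr1 y); apply: idM.
split; first split.
- by rewrite /is_proper_ideal /= rmorph1.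
- move=> a b; rewrite /= rmorphM => /hpr [h|[n h]]; [by left | right].
  by exists n; rewrite /= rmorphXn.
- move=> x; split.
  + move=> [n]; rewrite /= rmorphXn => h; apply: NNPP => Px.
    apply: nQ1; have u := unitrX n (hu _ Px).
    by rewrite -(mulVr u); apply: idM.
  + move=> Px; have [n hn] := hrad (f x) (ex_intro _ x (conj Px erefl)).
    by exists n; rewrite /= rmorphXn.
Qed.

Lemma sep_contr (R : comNzRingType) (P : ideal R) (S : comUnitRingType)
  (f : {rmorphism R -> S}) (I : ideal R) : noetherian R -> is_prime_ideal P ->
  is_localization_at P f -> contractions f I ->
  (exists Q, P_primary P Q /\ (forall z, ival I z -> ival Q z)) /\
  (forall x, ~ ival I x -> exists Q, [/\ P_primary P Q, (forall z, ival I z -> ival Q z) & ~ ival Q x]).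
Proof.
move=> hN hP hL [J [pJ eJ]].
have hNS := noeth_loc hN hL.
have hU := units_loc hP hL.
have gen : forall y, ~ ival J (f y) -> exists Q, [/\ P_primary P Q, (forall z, ival I z -> ival Q z) & ~ ival Q y].
  move=> y nJy.
  have [Q [JQ nQy hpr hrad]] := key hNS hU nJy.
  exists (comap f Q); split.
  - exact: (contr_primary hL nQy hpr hrad).
  - by move=> z /eJ /JQ.
  - exact: nQy.
split.
- have [|Q [h1 h2 _]] := gen 1; first by rewrite rmorph1.
  by exists Q.
- by move=> x nIx; apply: gen => h; apply: nIx; apply/eJ.
Qed.

Lemma sep_infty (R : comNzRingType) (P I : ideal R) : primaries_infty P I ->
  (exists Q, P_primary P Q /\ (forall z, ival I z -> ival Q z)) /\
  (forall x, ~ ival I x -> exists Q, [/\ P_primary P Q, (forall z, ival I z -> ival Q z) & ~ ival Q x]).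
Proof.
move=> [C [[Q0 CQ0] [CP eI]]]; split.
- by exists Q0; split; [apply: CP | move=> z /eI; apply].
- move=> x nIx; apply: NNPP => hn; apply: nIx; apply/eI => Q CQ; apply: NNPP => nQx.
  by apply: hn; exists Q; split => //; [apply: CP | move=> z /eI; apply].
Qed.

Lemma infty_of_sep (R : comNzRingType) (P I : ideal R) :
  (exists Q, P_primary P Q /\ (forall z, ival I z -> ival Q z)) ->
  (forall x, ~ ival I x -> exists Q, [/\ P_primary P Q, (forall z, ival I z -> ival Q z) & ~ ival Q x]) ->
  primaries_infty P I.
Proof.
move=> [Q0 [h0 i0]] hsep.
exists (fun Q => P_primary P Q /\ (forall z, ival I z -> ival Q z)); split; first by exists Q0.
split; first by move=> Q [].
move=> x; split; first by move=> Ix Q [_ h]; apply: h.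
move=> h; apply: NNPP => nIx; have [Q [pQ iQ nQ]] := hsep x nIx.
by apply: nQ; apply: h.
Qed.

Lemma proper_of_sep (R : comNzRingType) (P I : ideal R) :
  (exists Q, P_primary P Q /\ (forall z, ival I z -> ival Q z)) -> is_proper_ideal I.
Proof. by move=> [Q [[[pQ _] _] iQ]] h; apply: pQ; apply: iQ. Qed.

Lemma zbasic1 (R : comNzRingType) (a : R) K : zbasic [:: a] K <-> ival K a.
Proof.
split; first by move=> h; apply: h; rewrite mem_seq1.
by move=> h x; rewrite mem_seq1 => /eqP ->.
Qed.

Lemma zopen_basic (R : comNzRingType) (s : seq R) : zopen (zbasic s).
Proof. by move=> I h; exists s; split. Qed.

Lemma qc_basic1 (R : comNzRingType) (a : R) : quasi_compact (zbasic [:: a]).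
Proof.
move=> C hC hcov.
have [V [CV Va]] := hcov (princ a) (proj2 (zbasic1 a (princ a)) (ex_intro _ 1 (esym (mul1r a)))).
have [s [hs hsV]] := hC V CV (princ a) Va.
exists 1%N, (fun _ => V); split; first by move=> i _.
move=> I /zbasic1 Ia; exists 0%N; split => //; apply: hsV => x xs.
by have [r ->] := hs x xs; apply: idM.
Qed.

Lemma cl_sat (R : comNzRingType) (P I : ideal R) : cl_cons (primaries P) I ->
  forall s x, ~ ival P s -> ival I (s * x) -> ival I x.
Proof.
move=> hcl s x Ps Isx; apply: NNPP => nIx.
pose W (K : ideal R) := ival K (s * x) /\ ~ ival K x.
pose Sf (i : nat) := if i == 0%N then zbasic [:: s * x] else (fun K => ~ zbasic [:: x] K).
have hW : cons_open W.
  move=> K [h1 h2]; exists 2%N, Sf; split.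
  - case=> [|[|i]] // _; split.
    + by exists (zbasic [:: s * x]); split; [apply: zopen_basic | split; [apply: qc_basic1 | left]].
    + by apply/zbasic1.
    + by exists (zbasic [:: x]); split; [apply: zopen_basic | split; [apply: qc_basic1 | right]].
    + by move/zbasic1.
  - move=> L hL; split; first by apply/zbasic1; exact: (hL 0%N isT).
    by move=> Lx; apply: (hL 1%N isT); apply/zbasic1.
have [K [[hK1 hK2] [[pK prK] rK]]] := hcl W hW (conj Isx nIx).
rewrite mulrC in hK1; case: (prK _ _ hK1) => // hn.
by apply: Ps; apply/rK.
Qed.

Definition extI (R : comNzRingType) (P : ideal R) (S : comUnitRingType)
  (f : {rmorphism R -> S}) (I : ideal R) (hP : is_prime_ideal P)
  (hL : is_localization_at P f) : ideal S.
Proof.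
refine (@Ideal S (fun y => exists t a, [/\ ~ ival P t, ival I a & y * f t = f a]) _).
have [[pP prP] [hu hs hk]] := (hP, hL).
split.
- by exists 1, 0; split => //; [apply: id0 | rewrite mul0r rmorph0].
- move=> y z [t [a [Pt Ia e1]]] [u [b [Pu Ib e2]]].
  exists (t * u), (a * u + b * t); split.
  + by move=> /prP [].
  + by apply: idD; apply: idMr.
  + by rewrite rmorphD !rmorphM -e1 -e2; ring.
- move=> c y [t [a [Pt Ia e1]]].
  have [r [w [Pw ec]]] := hs c.
  exists (t * w), (r * a); split.
  + by move=> /prP [].
  + by apply: idM.
  + have ec' : c * f w = f r by rewrite ec mul_frac //; apply: hu.
    by rewrite !rmorphM -e1 -ec'; ring.
Defined.

Lemma contr_of_cl (R : comNzRingType) (P : ideal R) (S : comUnitRingType)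
  (f : {rmorphism R -> S}) (I : ideal R) : is_prime_ideal P ->
  is_localization_at P f -> cl_cons_proper (primaries P) I -> contractions f I.
Proof.
move=> hP hL [pI hcl].
have sat := cl_sat hcl.
have [[pP prP] [hu hs hk]] := (hP, hL).
have eq : forall x, ival I x <-> ival (extI I hP hL) (f x).
  move=> x; split.
  - by move=> Ix; exists 1, x; split => //; rewrite rmorph1 mulr1.
  - move=> [t [a [Pt Ia e]]].
    have : f (x * t - a) = 0 by rewrite rmorphB rmorphM e subrr.
    move=> /hk [u [Pu e0]].
    apply: (sat (u * t)); first by move=> /prP [].
    have -> : u * t * x = u * a by apply/eqP; rewrite -subr_eq0 -e0; apply/eqP; ring.
    by apply: idM.
exists (extI I hP hL); split => //.
by move=> h; apply: pI; apply/eq; rewrite rmorph1.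
Qed.

Lemma unit_of_notm (R : comNzRingType) (m : ideal R) : noetherian R -> local_with_max m ->
  forall u, ~ ival m u -> exists v, u * v = 1.
Proof.
move=> hN [hm hloc] u nmu; apply: NNPP => hn.
have n1 : ~ ival (princ u) 1 by move=> [r e]; apply: hn; exists r; rewrite mulrC e.
have [Mx [[sub nM1] Mmax]] := max_exists (F := fun L : ideal R => (forall z, ival (princ u) z -> ival L z) /\ ~ ival L 1) hN (conj (fun z h => h) n1).
have hmax : is_maximal_ideal Mx.
  split => // J pJ MJ; apply: Mmax => //; split => // z /sub; exact: MJ.
apply: nmu; apply/(hloc Mx hmax); apply: sub; exists 1; by rewrite mul1r.
Qed.

Lemma local_sep (R : comNzRingType) (m : ideal R) (I : ideal R) : noetherian R -> local_with_max m ->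
  forall y, ~ ival I y -> exists Q, [/\ P_primary m Q, (forall z, ival I z -> ival Q z) & ~ ival Q y].
Proof.
move=> hN hl y nIy.
have hu := unit_of_notm hN hl.
have [[pm _] _] := hl.
have hU : forall p c, ival m p -> exists v, (1 - p * c) * v = 1.
  move=> p c mp; apply: hu => h; apply: pm.
  have -> : 1 = (1 - p * c) + c * p by ring.
  by apply: idD => //; apply: idM.
have [Q [IQ nQy hpr hrad]] := key hN hU nIy.
have nQ1 : ~ ival Q 1 by move=> h; apply: nQy; rewrite -(mulr1 y); apply: idM.
exists Q; split => //; split; first by split.
move=> x; split; last exact: hrad.
move=> [n hn]; apply: NNPP => nmx; have [v hv] := hu x nmx.
by apply: nQ1; rewrite -(expr1n _ n) -hv exprMn; apply: idMr.
Qed.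

Theorem proposition5p3 :
  (forall (R : comNzRingType) (P : ideal R) (S : comUnitRingType)
          (f : {rmorphism R -> S}),
     noetherian R -> is_prime_ideal P -> is_localization_at P f ->
     (forall I : ideal R, primaries_infty P I <-> cl_cons_proper (primaries P) I) /\
     (forall I : ideal R, cl_cons_proper (primaries P) I <-> contractions f I))
  /\
  (forall (R : comNzRingType) (m : ideal R),
     noetherian R -> local_with_max m ->
     forall I : ideal R, is_proper_ideal I -> cl_cons_proper (primaries m) I).
Proof.
split.
- move=> R P S f hN hP hL.
  have A1 : forall I, primaries_infty P I -> cl_cons_proper (primaries P) I.
    move=> I hI; have [h0 hs] := sep_infty hI.
    by split; [apply: (proper_of_sep h0) | apply: cl_of_sep].
  have A2 : forall I, contractions f I -> primaries_infty P I.
    move=> I hI; have [h0 hs] := sep_contr hN hP hL hI; exact: infty_of_sep.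
  split => I; split.
  + exact: A1.
  + by move=> h; apply: A2; apply: (contr_of_cl hP hL).
  + exact: (contr_of_cl hP hL).
  + by move=> h; apply: A1; apply: A2.
- move=> R m hN hl I pI; split => //.
  apply: cl_of_sep.
  + have [Q [h1 h2 _]] := local_sep hN hl pI; by exists Q.
  + by move=> x nIx; apply: (local_sep hN hl nIx).
Qed.
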